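(* Let $I\subseteq\mathbb{R}_+\setminus\{0\}$ be a nonempty, non-singleton interval and let $n\in\mathbb{N}$ with $n\geq 2$. Suppose $\Phi: I\to\mathbb{R}$ satisfies $$\Phi(x)+\frac{(x+y)^n-x^n}{y^n}\Phi(y)=\Phi(y)+\frac{(x+y)^n-y^n}{x^n}\Phi(x)\qquad\text{for all } x,y\in I.$$ Then there exists $c\in\mathbb{R}$ such that $\Phi(x)=cx^n$ for all $x\in I$.
   Context: $\mathbb{R}_+$ denotes the set of nonnegative real numbers. *)

(* Defs.v *)
From Stdlib Require Import Reals.
Open Scope R_scope.

Definition is_interval (I : R -> Prop) : Prop :=
  forall x y z, I x -> I z -> x <= y <= z -> I y.

(* Main.v *)
Require Import Defs.
From Stdlib Require Import Reals Lra Lia Psatz.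
Open Scope R_scope.

Lemma pow_sum_gt (x y : R) (m : nat) : 0 < x -> 0 < y ->
  x ^ (S (S m)) + y ^ (S (S m)) < (x + y) ^ (S (S m)).
Proof.
  intros hx hy; induction m as [|m IH].
  - simpl; nra.
  - assert (0 < x ^ S (S m)) by (apply pow_lt; lra).
    assert (0 < y ^ S (S m)) by (apply pow_lt; lra).
    change ((x + y) ^ S (S (S m))) with ((x + y) * (x + y) ^ S (S m)).
    change (x ^ S (S (S m))) with (x * x ^ S (S m)).
    change (y ^ S (S (S m))) with (y * y ^ S (S m)).
    nra.
Qed.

Lemma key (Px Pa X A S : R) : 0 < X -> 0 < A -> 0 < S - X - A ->
  Px + (S - X) / A * Pa = Pa + (S - A) / X * Px -> Px = Pa / A * X.
Proof.
  intros hX hA hD H.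
  assert (H2 : Px*A*X + (S-X)*X*Pa = Pa*A*X + (S-A)*A*Px).
  { assert (E1 : Px*A*X + (S-X)*X*Pa = (Px + (S - X) / A * Pa) * (A*X)) by (field; lra).
    assert (E2 : Pa*A*X + (S-A)*A*Px = (Pa + (S - A) / X * Px) * (A*X)) by (field; lra).
    rewrite E1, E2, H; reflexivity. }
  assert (H3 : (Px*A - Pa*X)*(S-X-A) = 0) by lra.
  apply Rmult_integral in H3; destruct H3 as [H3|H3]; [|lra].
  apply (Rmult_eq_reg_r A); [|lra].
  field_simplify; [lra|lra].
Qed.

Theorem proposition2p6 (I : R -> Prop) (n : nat) (Phi : R -> R)
  (HI : is_interval I)
  (Hpos : forall x, I x -> 0 < x)
  (Hnontriv : exists a b, I a /\ I b /\ a <> b)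
  (Hn : (2 <= n)%nat)
  (Hfe : forall x y, I x -> I y ->
     Phi x + ((x + y) ^ n - x ^ n) / y ^ n * Phi y
     = Phi y + ((x + y) ^ n - y ^ n) / x ^ n * Phi x) :
  exists c : R, forall x, I x -> Phi x = c * x ^ n.
Proof.
  destruct Hnontriv as [a [b [Ha _]]].
  exists (Phi a / a ^ n).
  intros x Hx.
  pose proof (Hpos a Ha) as pa. pose proof (Hpos x Hx) as px.
  apply (key (Phi x) (Phi a) (x ^ n) (a ^ n) ((x + a) ^ n)).
  - apply pow_lt; lra.
  - apply pow_lt; lra.
  - destruct n as [|[|m]]; [lia|lia|].
    pose proof (pow_sum_gt x a m px pa); lra.
  - apply Hfe; assumption.
Qed.
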